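(* Let $1<p_1,\ldots,p_m<\infty$ and let $f\in\mathbb{R}^{d_1\times\cdots\times d_m}$, $f\ge0$, be weakly irreducible. Suppose there is $i\in[m]$ such that $(m-1)p_i'\le p_k$ for every $k\in[m]\setminus\{i\}$. Then $f$ has a strictly positive singular vector $\mathbf x^*>0$ with $Q(\mathbf x^* )=\|f\|_{p_1,\ldots,p_m}$.
   Context: $f$ is identified with the multilinear form $f(\mathbf x)=\sum f_{j_1,\ldots,j_m}x_{1,j_1}\cdots x_{m,j_m}$ on $\prod_k\mathbb{R}^{d_k}$. $p'=p/(p-1)$. $Q(\mathbf x)=|f(\mathbf x)|/\prod_k\|\mathbf x_k\|_{p_k}$, $\|f\|_{p_1,\ldots,p_m}=\max Q$; singular vectors are critical points of $Q$ (with $f(\mathbf x)\ne0$). Weak irreducibility: the undirected graph on $\bigcup_k\{k\}\times[d_k]$ with $(k,j_k)\sim(l,j_l)$ ($k\ne l$) iff $f_{j_1,\ldots,j_m}>0$ for some choice of the remaining indices, is connected. *)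

(* Defs.v *)
From HB Require Import structures.
From mathcomp Require Import all_boot all_order all_algebra.
From mathcomp Require Import all_classical all_reals all_analysis.
Set Implicit Arguments. Unset Strict Implicit. Unset Printing Implicit Defensive.
Import Order.TTheory GRing.Theory Num.Theory.
Local Open Scope ring_scope.

Definition tidx (m : nat) (d : 'I_m -> nat) := {dffun forall k : 'I_m, 'I_(d k)}.

(* Vertices (k, j_k) of the disjoint union  U_k {k} x [d_k].  A point
   x = (x_1,...,x_m) of  prod_k R^{d_k}  is a function on these vertices:
   x_{k,j} = x (Tagged _ j)  with j : 'I_(d k). *)
Definition tvtx (m : nat) (d : 'I_m -> nat) := {k : 'I_m & 'I_(d k)}.

Definition ventry (m : nat) (d : 'I_m -> nat) (k : 'I_m) (j : 'I_(d k)) : tvtx d :=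
  Tagged (fun l => 'I_(d l)) j.

Definition mform (R : realType) (m : nat) (d : 'I_m -> nat)
  (f : tidx d -> R) (x : tvtx d -> R) : R :=
  \sum_(j : tidx d) f j * \prod_(k < m) x (ventry (j k)).

Definition pnorm (R : realType) (m : nat) (d : 'I_m -> nat)
  (p : R) (x : tvtx d -> R) (k : 'I_m) : R :=
  (\sum_(j < d k) `|x (ventry j)| `^ p) `^ (p^-1).

Definition Qfun (R : realType) (m : nat) (d : 'I_m -> nat)
  (p : 'I_m -> R) (f : tidx d -> R) (x : tvtx d -> R) : R :=
  `|mform f x| / \prod_(k < m) pnorm (p k) x k.

Definition admissible (R : realType) (m : nat) (d : 'I_m -> nat)
  (x : tvtx d -> R) : Prop :=
  forall k : 'I_m, exists j : 'I_(d k), x (ventry j) != 0.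

Definition upd (R : realType) (m : nat) (d : 'I_m -> nat)
  (x : tvtx d -> R) (v : tvtx d) (t : R) : tvtx d -> R :=
  fun w => if w == v then x w + t else x w.

Definition singular_vector (R : realType) (m : nat) (d : 'I_m -> nat)
  (p : 'I_m -> R) (f : tidx d -> R) (x : tvtx d -> R) : Prop :=
  [/\ admissible x, mform f x != 0 &
      forall v : tvtx d, is_derive (0 : R) (1 : R) (fun t => Qfun p f (upd x v t)) 0].

Definition wi_edge (R : realType) (m : nat) (d : 'I_m -> nat)
  (f : tidx d -> R) : rel (tvtx d) :=
  fun u v => (tag u != tag v) &&
    [exists j : tidx d, [&& j (tag u) == tagged u, j (tag v) == tagged v & 0 < f j]].

Definition weakly_irreducible (R : realType) (m : nat) (d : 'I_m -> nat)
  (f : tidx d -> R) : Prop :=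
  forall u v : tvtx d, connect (wi_edge f) u v.

Definition conjexp (R : realType) (p : R) : R := p / (p - 1).

(* Main.v *)
Require Import Defs.
From HB Require Import structures.
From mathcomp Require Import all_boot all_order all_algebra.
From mathcomp Require Import all_classical all_reals all_analysis.
From mathcomp Require Import ring lra.
Import Order.TTheory GRing.Theory Num.Theory.
Import numFieldNormedType.Exports.
Set Implicit Arguments. Unset Strict Implicit. Unset Printing Implicit Defensive.
Local Open Scope ring_scope.
Section A.
Variable R : realType.

Lemma sum_const_neq m (l : 'I_m) (q : R) :
  \sum_(c | c != l) q = (m - 1)%N%:R * q.
Proof.
by rewrite sumr_const cardC1 card_ord subn1 mulr_natl.
Qed.

Lemma sum_inv_lt1 m (p : 'I_m -> R) (i : 'I_m) :
  (1 < m)%N -> (forall k, 1 < p k) ->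
  (forall k, k != i -> (m - 1)%N%:R * conjexp (p i) <= p k) ->
  forall l : 'I_m, \sum_(c | c != l) (p c)^-1 < 1.
Proof.
move=> m1 p1 hyp l.
have pi0 : 0 < p i by apply: lt_trans (p1 i).
have pi1 : 0 < p i - 1 by rewrite subr_gt0.
have m0 : 0 < (m - 1)%N%:R :> R by rewrite ltr0n subn_gt0.
set q := (1 - (p i)^-1) / (m - 1)%N%:R.
have qE : q = ((m - 1)%N%:R * conjexp (p i))^-1.
  rewrite /q /conjexp; field.
  by rewrite !gt_eqF.
have q0 : 0 < q.
  rewrite qE invr_gt0 mulr_gt0 // /conjexp divr_gt0 //.
have hq : forall k, k != i -> (p k)^-1 <= q.
  move=> k ki; rewrite qE lef_pV2 ?hyp //.
    by rewrite posrE; apply: lt_trans (p1 k).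
  by rewrite posrE mulr_gt0 // /conjexp divr_gt0.
have mq : (m - 1)%N%:R * q = 1 - (p i)^-1.
  by rewrite /q mulrC -mulrA mulVf ?mulr1 // gt_eqF.
have pinv0 : 0 < (p i)^-1 by rewrite invr_gt0.
case: (eqVneq l i) => [->|li].
  apply: (le_lt_trans (y := \sum_(c | c != i) q)).
    by apply: ler_sum => c ci; apply: hq.
  by rewrite sum_const_neq mq ltrBlDr ltrDl.
rewrite (bigD1 i) /=; last by rewrite eq_sym.
have e2 : \sum_(c | c != l) q = q + \sum_(c | (c != l) && (c != i)) q.
  by rewrite (bigD1 i) // eq_sym.
have le2 : \sum_(c | (c != l) && (c != i)) (p c)^-1 <= \sum_(c | (c != l) && (c != i)) q.
  by apply: ler_sum => c /andP[_ ci]; apply: hq.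
rewrite sum_const_neq mq in e2.
have -> : 1 = (p i)^-1 + (1 - (p i)^-1) by rewrite addrC subrK.
rewrite ltrD2l e2.
apply: (le_lt_trans le2).
by rewrite ltrDr // eq_sym.
Qed.

End A.
Section B.
Variable R : realType.
Variable m : nat.
Variable d : 'I_m -> nat.
Implicit Types (x y : tvtx d -> R) (f : tidx d -> R).

Definition bsum (q : R) x (k : 'I_m) : R := \sum_(j < d k) `|x (ventry j)| `^ q.

Lemma pnormE (q : R) x k : pnorm q x k = bsum q x k `^ q^-1.
Proof. by []. Qed.

Lemma bsum_ge0 q x k : 0 <= bsum q x k.
Proof. by apply: sumr_ge0 => j _; apply: powR_ge0. Qed.

Definition sc (c : 'I_m -> R) x : tvtx d -> R := fun v => c (tag v) * x v.

Lemma mform_sc f c x : mform f (sc c x) = (\prod_k c k) * mform f x.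
Proof.
rewrite /mform mulr_sumr; apply: eq_bigr => j _.
rewrite /sc /= big_split /=.
by rewrite mulrCA.
Qed.

Lemma bsum_sc c x (q : R) k : 0 < c k -> bsum q (sc c x) k = c k `^ q * bsum q x k.
Proof.
move=> c0; rewrite /bsum mulr_sumr; apply: eq_bigr => j _.
by rewrite /sc /= normrM (gtr0_norm c0) powRM // ltW.
Qed.

Lemma pnorm_sc c x (q : R) k : 0 < c k -> 0 < q ->
  pnorm q (sc c x) k = c k * pnorm q x k.
Proof.
move=> c0 q0; rewrite !pnormE bsum_sc // powRM ?powR_ge0 ?bsum_ge0 //.
by rewrite -powRrM mulfV ?gt_eqF // powRr1 // ltW.
Qed.

Lemma Qfun_sc (p : 'I_m -> R) f c x : (forall k, 0 < c k) -> (forall k, 0 < p k) ->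
  Qfun p f (sc c x) = Qfun p f x.
Proof.
move=> c0 p0; rewrite /Qfun mform_sc.
transitivity (`|\prod_k c k * mform f x| / (\prod_k c k * \prod_k pnorm (p k) x k)).
  congr (_ / _); rewrite -big_split; apply: eq_bigr => k _ /=; exact: pnorm_sc.
rewrite normrM ger0_norm; last by apply: prodr_ge0 => k _; apply: ltW.
rewrite -mulf_div mulfV ?mul1r //.
by apply/prodf_neq0 => k _; rewrite gt_eqF.
Qed.

Lemma bsum_pos_adm x q k : admissible x -> 0 < q -> 0 < bsum q x k.
Proof.
move=> /(_ k) [j xj] q0; rewrite /bsum (bigD1 j) //=.
apply: (lt_le_trans (y := `|x (ventry j)| `^ q)).
  by apply: powR_gt0; rewrite normr_gt0.
rewrite lerDl; apply: sumr_ge0 => i _; apply: powR_ge0.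
Qed.

Lemma pnorm_pos_adm x q k : admissible x -> 0 < q -> 0 < pnorm q x k.
Proof. by move=> ax q0; rewrite pnormE powR_gt0 // bsum_pos_adm. Qed.

Lemma bsum1_pnorm x q k : bsum q x k = 1 -> pnorm q x k = 1.
Proof. by rewrite pnormE => ->; rewrite powR1. Qed.

Lemma pnorm1_bsum x q k : 0 < q -> pnorm q x k = 1 -> bsum q x k = 1.
Proof.
move=> q0; rewrite pnormE => /eqP; rewrite powR_eq1 => /orP[/eqP //|/orP[]].
  by rewrite ltNge bsum_ge0.
by rewrite invr_eq0 gt_eqF.
Qed.

Lemma Qfun_N (p : 'I_m -> R) f x : (forall k, bsum (p k) x k = 1) ->
  Qfun p f x = `|mform f x|.
Proof.
move=> hx; rewrite /Qfun big1 ?divr1 // => k _; exact: bsum1_pnorm.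
Qed.

Lemma normalize (p : 'I_m -> R) f x : admissible x -> (forall k, 0 < p k) ->
  exists y, (forall k, bsum (p k) y k = 1) /\ Qfun p f x = `|mform f y|.
Proof.
move=> ax p0.
pose c := fun k => (pnorm (p k) x k)^-1.
have c0 : forall k, 0 < c k by move=> k; rewrite invr_gt0 pnorm_pos_adm.
have hb : forall k, bsum (p k) (sc c x) k = 1.
  move=> k; apply: pnorm1_bsum (p0 k) _.
  by rewrite pnorm_sc // /c mulVf // gt_eqF // pnorm_pos_adm.
exists (sc c x); split => //.
by rewrite -(@Qfun_sc p f c x c0 p0) Qfun_N.
Qed.

End B.
Section C.
Variable R : realType.

Lemma cont_sum (T : topologicalType) (I : Type) (r : seq I) (P : pred I)
  (F : I -> T -> R) :
  (forall i, continuous (F i)) -> continuous (fun x => \sum_(i <- r | P i) F i x).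
Proof.
move=> hF; elim: r => [|a r IH].
  under eq_fun do rewrite big_nil.
  exact: cst_continuous.
under eq_fun do rewrite big_cons.
case: (P a) => //.
move=> x; exact: (continuousD (hF a x) (IH x)).
Qed.

Lemma cont_prod (T : topologicalType) (I : Type) (r : seq I) (P : pred I)
  (F : I -> T -> R) :
  (forall i, continuous (F i)) -> continuous (fun x => \prod_(i <- r | P i) F i x).
Proof.
move=> hF; elim: r => [|a r IH].
  under eq_fun do rewrite big_nil.
  exact: cst_continuous.
under eq_fun do rewrite big_cons.
case: (P a) => //.
move=> x; exact: (continuousM (hF a x) (IH x)).
Qed.

Lemma cont_powR_pos (q : R) (a : R) : 0 < a -> {for a, continuous (fun t => t `^ q)}.
Proof.
move=> a0; apply: differentiable_continuous; apply/derivable1_diffP.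
by apply: derivable_powR; rewrite in_itv /= a0.
Qed.

Lemma cont_abspow (q : R) : 0 < q -> continuous (fun t : R => `|t| `^ q).
Proof.
move=> q0 t0; have [->|t00] := eqVneq t0 0.
  apply/cvgrPdist_lt => e e0.
  rewrite normr0 powR0 ?gt_eqF //.
  exists (e `^ q^-1); first by rewrite /= powR_gt0.
  move=> t /= ht; change (`|(0:R) - `|t| `^ q| < e).
  have {ht} ht : `|t| < e `^ q^-1 by move: ht; rewrite distrC subr0.
  rewrite sub0r normrN ger0_norm ?powR_ge0 //.
  have -> : e = (e `^ q^-1) `^ q by rewrite -powRrM mulVf ?gt_eqF ?powRr1 // ltW.
  by apply: gt0_ltr_powR; rewrite // nnegrE ?normr_ge0 ?powR_ge0.
apply: (@continuous_comp _ _ _ (@Num.Def.normr R R) (fun t => t `^ q)).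
  exact: norm_continuous.
by apply: cont_powR_pos; rewrite normr_gt0.
Qed.

End C.
Module MaxMod.
Import ArrowAsProduct.
Section D.
Variable R : realType.
Variable m : nat.
Variable d : 'I_m -> nat.


Lemma cont_bsum (q : R) k : 0 < q ->
  continuous (fun x : tvtx d -> R => bsum q x k).
Proof.
move=> q0; rewrite /bsum.
apply: (cont_sum (F := fun (j : 'I_(d k)) (x : tvtx d -> R) => `|x (ventry j)| `^ q)).
move=> j x.
apply: (@continuous_comp _ _ _ (fun x : tvtx d -> R => x (ventry j)) (fun t : R => `|t| `^ q)).
  exact: (@proj_continuous _ (fun _ : tvtx d => R) (ventry j)).
exact: cont_abspow.
Qed.

Lemma cont_mform (f : tidx d -> R) : continuous (fun x : tvtx d -> R => `|mform f x|).
Proof.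
move=> x.
apply: (@continuous_comp _ _ _ (fun x : tvtx d -> R => mform f x) (@Num.Def.normr R R)); last first.
  exact: norm_continuous.
rewrite /mform.
apply: (cont_sum (F := fun (J : tidx d) (x : tvtx d -> R) => f J * \prod_(k < m) x (ventry (J k)))).
move=> J y.
apply: (continuousM (s := fun _ => f J)); first exact: cst_continuous.
apply: (cont_prod (F := fun (k : 'I_m) (x : tvtx d -> R) => x (ventry (J k)))).
move=> k z.
exact: (@proj_continuous _ (fun _ : tvtx d => R) (ventry (J k))).
Qed.


Lemma Nset_box (p : 'I_m -> R) (x : tvtx d -> R) : (forall k, 0 < p k) ->
  (forall k, bsum (p k) x k = 1) -> forall v, `|x v| <= 1.
Proof.
move=> p0 hx [k j].
have : `|x (ventry j)| `^ p k <= 1.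
  rewrite -(hx k) /bsum (bigD1 j) //= lerDl.
  by apply: sumr_ge0 => i _; apply: powR_ge0.
apply: contraTT; rewrite -!ltNge => h1.
apply: (le_lt_trans (y := 1 `^ p k)); first by rewrite powR1.
by apply: gt0_ltr_powR; rewrite // nnegrE ?normr_ge0.
Qed.

Lemma exists_max (p : 'I_m -> R) (f : tidx d -> R) (x1 : tvtx d -> R) :
  (forall k, 0 < p k) -> (forall k, bsum (p k) x1 k = 1) ->
  exists2 x0 : tvtx d -> R, (forall k, bsum (p k) x0 k = 1) &
    (forall y, (forall k, bsum (p k) y k = 1) -> `|mform f y| <= `|mform f x0|).
Proof.
move=> p0 hx1.
Local Open Scope classical_set_scope.
pose A := fun _ : tvtx d => `[(-1 : R), 1]%classic.
pose B := [set x : tvtx d -> R | forall v, A v (x v)].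
pose N := [set x : tvtx d -> R | forall k, bsum (p k) x k = 1].
have cB : compact B.
  exact: (@tychonoff _ (fun _ : tvtx d => R) A (fun _ => @segment_compact R (-1) 1)).
have NE : N = \bigcap_(k in [set: 'I_m]) ((fun x => bsum (p k) x k) @^-1` [set 1]).
  apply/seteqP; split => x /=.
    by move=> hx k _; apply: hx.
  by move=> hx k; apply: hx.
have cN : closed N.
  rewrite NE; apply: closed_bigI => k _.
  apply: preimage_closed; last exact: closed_eq.
  by move=> x _; apply: cont_bsum.
have NB : N `<=` B.
  move=> x hx v; rewrite /A /= in_itv /= -ler_norml.
  exact: Nset_box.
have cBN : compact (B `&` N) by apply: compact_closedI.
have BN0 : (B `&` N) !=set0 by exists x1; split => //; apply: NB.
have [c cin cmax] := compact_EVT_max BN0 cBN (continuous_subspaceT (@cont_mform f)).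
move: cin; rewrite inE => -[_ cN'].
exists c => // y hy; apply: cmax.
by rewrite inE; split => //; apply: NB.
Qed.

End D.
End MaxMod.
Section E.
Variable R : realType.
Variable m : nat.
Variable d : 'I_m -> nat.
Variable p : 'I_m -> R.
Variable f : tidx d -> R.

Lemma exists_pos_entry : (1 < m)%N -> (forall k, (0 < d k)%N) ->
  weakly_irreducible f -> exists J, 0 < f J.
Proof.
move=> m1 dpos wi.
pose k0 : 'I_m := Ordinal (ltn_trans (ltnSn 0) m1).
pose k1 : 'I_m := Ordinal m1.
pose u := ventry (Ordinal (dpos k0)).
pose w := ventry (Ordinal (dpos k1)).
case/connectP: (wi u w) => s; case: s => [|a s] /=.
  by move=> _ /(congr1 tag) /= /(congr1 val).
move=> /andP[/andP[_ /existsP [J /and3P [_ _ hJ]]] _] _.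
by exists J.
Qed.

Lemma mform_ge0 x : (forall J, 0 <= f J) -> (forall v, 0 <= x v) -> 0 <= mform f x.
Proof.
move=> f0 x0; apply: sumr_ge0 => J _; apply: mulr_ge0 => //.
by apply: prodr_ge0 => k _.
Qed.

Lemma max_props J0 : (forall k, 0 < p k) -> (forall J, 0 <= f J) -> 0 < f J0 ->
  exists x : tvtx d -> R, [/\ forall v, 0 <= x v, forall k, bsum (p k) x k = 1,
    forall y, admissible y -> Qfun p f y <= mform f x & 0 < mform f x].
Proof.
move=> p0 f0 fJ.
pose x1 := fun v : tvtx d => if tagged v == J0 (tag v) then 1 else 0 : R.
have x1ge0 : forall v, 0 <= x1 v by move=> v; rewrite /x1; case: ifP.
have hx1 : forall k, bsum (p k) x1 k = 1.
  move=> k; rewrite /bsum (bigD1 (J0 k)) //= big1 => [|i hi].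
    by rewrite /x1 /= eqxx normr1 powR1 addr0.
  by rewrite /x1 /= (negbTE hi) normr0 powR0 // gt_eqF.
have [x0 hx0 hmax] := MaxMod.exists_max f p0 hx1.
pose x := fun v => `|x0 v|.
have hxN : forall k, bsum (p k) x k = 1.
  by move=> k; rewrite -(hx0 k) /bsum; apply: eq_bigr => j _; rewrite /x normr_id.
have xge0 : forall v, 0 <= x v by move=> v; apply: normr_ge0.
have mx0 : 0 <= mform f x by apply: mform_ge0.
have mxE : mform f x = `|mform f x0|.
  apply/le_anti/andP; split; first by rewrite -{1}(ger0_norm mx0); apply: hmax.
  have -> : mform f x = \sum_J `|f J * \prod_(k < m) x0 (ventry (J k))|.
    apply: eq_bigr => J _; rewrite normrM normr_prod ger0_norm //.
  exact: ler_norm_sum.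
exists x; split => //.
  move=> y ay; have [y' [hy' ->]] := normalize f ay p0.
  by rewrite mxE; apply: hmax.
apply: (lt_le_trans (y := `|mform f x1|)); last by rewrite mxE; apply: hmax.
rewrite ger0_norm ?mform_ge0 //.
rewrite /mform (bigD1 J0) //=.
apply: (lt_le_trans (y := f J0)) => //.
rewrite big1 => [|k _]; last by rewrite /x1 /= eqxx.
rewrite mulr1 lerDl; apply: sumr_ge0 => J _; apply: mulr_ge0 => //.
by apply: prodr_ge0 => k _.
Qed.

End E.
Section F.
Variable R : realType.

Lemma path_cross (T : Type) (e : rel T) (P : pred T) z s :
  ~~ P z -> P (last z s) -> path e z s -> exists a b, [/\ ~~ P a, P b & e a b].
Proof.
elim: s z => [|a s IH] z /= Pz; first by rewrite (negbTE Pz).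
move=> Pl /andP[eza pas].
case Pa: (P a); first by exists z, a.
by apply: (IH a) => //; rewrite Pa.
Qed.

Lemma prod_powR (a : R) (I : Type) (r : seq I) (P : pred I) (e : I -> R) :
  0 < a -> \prod_(i <- r | P i) a `^ e i = a `^ (\sum_(i <- r | P i) e i).
Proof.
move=> a0; elim: r => [|i r IH]; first by rewrite !big_nil powRr0.
rewrite !big_cons; case: (P i) => //.
by rewrite IH -powRD //; apply/implyP => _; rewrite gt_eqF.
Qed.

End F.
Section G.
Variable R : realType.
Variable m : nat.
Variable d : 'I_m -> nat.
Variable p : 'I_m -> R.
Variable f : tidx d -> R.

Lemma N_adm (x : tvtx d -> R) : (forall k, 0 < p k) ->
  (forall k, bsum (p k) x k = 1) -> admissible x.
Proof.
move=> p0 xN k.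
case: (pickP (fun j : 'I_(d k) => x (ventry j) != 0)) => [j hj|H]; first by exists j.
have := xN k; rewrite /bsum big1 => [|j _].
  by move/eqP; rewrite eq_sym oner_eq0.
by have /= /negbT := H j; rewrite negbK => /eqP ->; rewrite normr0 powR0 // gt_eqF.
Qed.

Lemma pos_max (x : tvtx d -> R) :
  (forall k, 0 < p k) -> (forall J, 0 <= f J) -> weakly_irreducible f ->
  (forall l : 'I_m, \sum_(c | c != l) (p c)^-1 < 1) ->
  (forall v, 0 <= x v) -> (forall k, bsum (p k) x k = 1) ->
  (forall y, admissible y -> Qfun p f y <= mform f x) -> 0 < mform f x ->
  forall v, 0 < x v.
Proof.
move=> p0 f0 wi sumlt xge0 xN xmax lam0 v.
rewrite lt_def xge0 andbT; apply/negP => /negPn xv0.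
have admx := N_adm p0 xN.
have [jw hjw] := admx (tag v).
case/connectP: (wi v (ventry jw)) => s ps ls.
have [a [b [/negPn/eqP xa /= xb /andP[tab /existsP [j /and3P [/eqP ja /eqP jb fj]]]]]] :=
  @path_cross _ _ (fun u => x u != 0) v s xv0 (ltac:(by rewrite /= -ls)) ps.
have ea : ventry (j (tag a)) = a by case: a {xa tab} ja => ka ia /= ja; rewrite /ventry ja.
have eb : ventry (j (tag b)) = b by case: b {xb tab} jb => kb ib /= jb; rewrite /ventry jb.
pose S := [pred c | x (ventry (j c)) == 0].
have Sl : ~~ S (tag b) by rewrite /S /= eb.
pose A := \sum_(c | S c) (p c)^-1.
have A1 : A < 1.
  apply: le_lt_trans (sumlt (tag b)).
  rewrite /A [X in X <= _]big_mkcond [X in _ <= X]big_mkcond /=.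
  apply: ler_sum => c _; case: ifP => Sc; case: ifP => cl //.
    by move/negbT: cl; rewrite negbK => /eqP ceq; move: Sl; rewrite -ceq /= Sc.
  by rewrite invr_ge0 ltW.
pose lam := mform f x.
pose C0 := \prod_(c | ~~ S c) x (ventry (j c)).
have C00 : 0 < C0.
  by apply: prodr_gt0 => c /= Sc; rewrite lt_def Sc xge0.
pose K := f j * C0.
have K0 : 0 < K by apply: mulr_gt0.
pose t := (K / (2 * lam)) `^ (1 - A)^-1.
have t0 : 0 < t by apply: powR_gt0; apply: divr_gt0 => //; apply: mulr_gt0.
pose y := fun u : tvtx d => if (x u == 0) && (tagged u == j (tag u))
                           then t `^ (p (tag u))^-1 else x u.
have hxy : forall u, 0 <= x u <= y u.
  move=> u; rewrite xge0 /= /y; case: ifP => [/andP[/eqP -> _]|_]; last exact: lexx.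
  exact: powR_ge0.
have ady : admissible y.
  by move=> k; have [i hi] := admx k; exists i; rewrite /y (negbTE hi).
have hb : forall k, bsum (p k) y k = 1 + (if S k then t else 0).
  move=> k; have hk := xN k; rewrite /bsum (bigD1 (j k)) //= in hk.
  rewrite /bsum (bigD1 (j k)) //=.
  have -> : \sum_(i < d k | i != j k) `|y (ventry i)| `^ p k =
            \sum_(i < d k | i != j k) `|x (ventry i)| `^ p k.
    by apply: eq_bigr => i hi; rewrite /y /= (negbTE hi) andbF.
  rewrite /y /S /= eqxx andbT.
  case: eqP => [h0|h0].
    rewrite h0 normr0 powR0 ?gt_eqF // add0r in hk.
    rewrite hk ger0_norm ?powR_ge0 // -powRrM mulVf ?gt_eqF // powRr1 ?(ltW t0) //.
    by rewrite addrC.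
  by rewrite hk addr0.
have hprod : \prod_k pnorm (p k) y k = (1 + t) `^ A.
  rewrite (eq_bigr (fun k => if S k then (1 + t) `^ (p k)^-1 else 1)); last first.
    move=> k _; rewrite pnormE hb; case: (S k) => //.
    by rewrite addr0 powR1.
  rewrite -big_mkcond /= prod_powR //.
  by apply: (lt_trans ltr01); rewrite ltrDl.
have hA1 : (1 + t) `^ A <= 1 + t.
  by apply: ler1_powR; [rewrite lerDl ltW | apply: ltW].
have tA0 : 0 < t `^ A by apply: powR_gt0.
have hmy : lam + K * t `^ A <= mform f y.
  have e1 : mform f y - lam = \sum_J (f J * \prod_(c < m) y (ventry (J c)) -
                               f J * \prod_(c < m) x (ventry (J c))).
    by rewrite /lam /mform sumrB.
  have ey : forall c, y (ventry (j c)) = if S c then t `^ (p c)^-1 else x (ventry (j c)).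
    by move=> c; rewrite /y /= eqxx andbT.
  have jt : f j * \prod_(c < m) y (ventry (j c)) - f j * \prod_(c < m) x (ventry (j c))
            = K * t `^ A.
    have -> : \prod_(c < m) x (ventry (j c)) = 0.
      by rewrite (bigD1 (tag a)) //= ea xa mul0r.
    rewrite mulr0 subr0 (eq_bigr _ (fun c _ => ey c)) (bigID S) /=.
    have -> : \prod_(c | S c) (if S c then t `^ (p c)^-1 else x (ventry (j c))) = t `^ A.
      rewrite -prod_powR //; apply: eq_bigr => c -> //.
    have -> : \prod_(c | ~~ S c) (if S c then t `^ (p c)^-1 else x (ventry (j c))) = C0.
      by apply: eq_bigr => c /negbTE ->.
    by rewrite /K mulrCA mulrC.
  have : K * t `^ A <= mform f y - lam.
    rewrite e1 (bigD1 j) //= jt lerDl; apply: sumr_ge0 => J _.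
    rewrite subr_ge0; apply: ler_wpM2l => //; apply: ler_prod => c _; exact: hxy.
  by rewrite lerBrDl.
have mypos : 0 < mform f y.
  by apply: lt_le_trans hmy; apply: addr_gt0 => //; apply: mulr_gt0.
have Qy : Qfun p f y = mform f y / (1 + t) `^ A.
  by rewrite /Qfun hprod ger0_norm // ltW.
have htB : t `^ (1 - A) = K / (2 * lam).
  rewrite /t -powRrM mulVf ?powRr1 //; last by rewrite subr_eq0 gt_eqF.
  by apply: ltW; apply: divr_gt0 => //; apply: mulr_gt0.
have htt : t = t `^ A * t `^ (1 - A).
  rewrite -powRD; last by apply/implyP => _; rewrite gt_eqF.
  by rewrite addrC subrK powRr1 // ltW.
have elt : lam * t = t `^ A * K / 2.
  have -> : lam * t = lam * (t `^ A * t `^ (1 - A)) by rewrite -htt.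
  rewrite htB; field; rewrite gt_eqF //.
have key : lam < Qfun p f y.
  rewrite Qy.
  apply: (lt_le_trans (y := (lam + K * t `^ A) / (1 + t))).
    rewrite ltr_pdivlMr; last by rewrite addr_gt0.
    rewrite mulrDr mulr1 elt.
    have := mulr_gt0 K0 tA0; lra.
  apply: (le_trans (y := mform f y / (1 + t))).
    by rewrite ler_pM2r // invr_gt0 addr_gt0.
  apply: ler_wpM2l; first exact: ltW.
  have P1 : 0 < 1 + t by rewrite addr_gt0.
  by rewrite lef_pV2 ?posrE ?(powR_gt0 _ P1).
by have := xmax y ady; rewrite leNgt key.
Qed.

End G.
Section H.
Variable R : realType.

Lemma der_sum (I : Type) (r : seq I) (P : pred I) (F : I -> R -> R) (t : R) :
  (forall i, derivable (F i) t 1) ->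
  derivable (fun s => \sum_(i <- r | P i) F i s) t 1.
Proof.
move=> hF; elim: r => [|a r IH].
  under eq_fun do rewrite big_nil.
  exact: derivable_cst.
under eq_fun do rewrite big_cons.
case: (P a); [exact: (derivableD (hF a) IH) | exact: IH].
Qed.

Lemma der_prod (I : Type) (r : seq I) (P : pred I) (F : I -> R -> R) (t : R) :
  (forall i, derivable (F i) t 1) ->
  derivable (fun s => \prod_(i <- r | P i) F i s) t 1.
Proof.
move=> hF; elim: r => [|a r IH].
  under eq_fun do rewrite big_nil.
  exact: derivable_cst.
under eq_fun do rewrite big_cons.
case: (P a); [exact: (derivableM (hF a) IH) | exact: IH].
Qed.

Lemma der_powR (h : R -> R) (t q : R) :
  derivable h t 1 -> 0 < h t -> derivable (fun s => h s `^ q) t 1.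
Proof.
move=> dh h0; apply/derivable1_diffP.
apply: (@differentiable_comp _ _ _ _ h (fun u : R => u `^ q)).
  exact/derivable1_diffP.
apply/derivable1_diffP; apply: derivable_powR.
by rewrite in_itv /= h0.
Qed.

End H.
Section I.
Variable R : realType.
Variable m : nat.
Variable d : 'I_m -> nat.
Variable p : 'I_m -> R.
Variable f : tidx d -> R.

Lemma pos_adm (x y : tvtx d -> R) : admissible x -> (forall w, 0 < y w) -> admissible y.
Proof. by move=> ax yp k; have [j _] := ax k; exists j; rewrite gt_eqF. Qed.

Lemma upd_pos (x : tvtx d -> R) v t : (forall w, 0 < x w) -> - x v < t ->
  forall w, 0 < upd x v t w.
Proof.
move=> xp ht w; rewrite /upd; case: eqP => [->|_] //.
by rewrite -ltrBlDl sub0r.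
Qed.

Lemma der_ent (x : tvtx d -> R) v w (t : R) : derivable (fun s => upd x v s w) t 1.
Proof.
rewrite /upd; case: (w == v).
  have -> : (fun s : R => x w + s) = cst (x w) + id by apply/funext.
  by apply: derivableD; [exact: derivable_cst | exact: derivable_id].
exact: derivable_cst.
Qed.

Lemma sing_deriv (x : tvtx d -> R) : (forall k, 0 < p k) -> (forall J, 0 <= f J) ->
  admissible x -> (forall w, 0 < x w) ->
  (forall y, admissible y -> Qfun p f y <= Qfun p f x) ->
  forall v, is_derive (0 : R) (1 : R) (fun t => Qfun p f (upd x v t)) 0.
Proof.
move=> p0 f0 ax xp xmax v.
have xv := xp v.
apply: (@derive1_at_max _ _ (- x v) (x v) 0).
- by rewrite -subr_ge0 opprK addr_ge0 // ltW.
- move=> t0 ht0.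
  have ent0 : forall w, 0 < upd x v t0 w.
    by apply: upd_pos => //; move: ht0; rewrite in_itv /= => /andP[].
  pose M := fun s => mform f (upd x v s).
  pose B := fun k s => \sum_(j < d k) (upd x v s (ventry j)) `^ p k.
  pose D := fun s => \prod_(k < m) B k s `^ (p k)^-1.
  have dM : derivable M t0 1.
    apply: (der_sum (F := fun J s => f J * \prod_(k < m) upd x v s (ventry (J k)))) => J.
    apply: (derivableM (f := cst (f J))); first exact: derivable_cst.
    apply: (der_prod (F := fun k s => upd x v s (ventry (J k)))) => k.
    exact: der_ent.
  have B0 : forall k, 0 < B k t0.
    move=> k; have -> : B k t0 = bsum (p k) (upd x v t0) k.
      by apply: eq_bigr => j _; rewrite ger0_norm // ltW.
    apply: bsum_pos_adm => //; apply: (pos_adm ax) => //.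
  have dD : derivable D t0 1.
    apply: (der_prod (F := fun k s => B k s `^ (p k)^-1)) => k.
    apply: (der_powR _ (B0 k)).
    apply: (der_sum (F := fun j s => upd x v s (ventry j) `^ p k)) => j.
    by apply: der_powR; [exact: der_ent | exact: ent0].
  have D0 : D t0 != 0.
    by rewrite gt_eqF // /D; apply: prodr_gt0 => k _; apply: powR_gt0.
  have dg2 : derivable (M * (fun s => (D s)^-1)) t0 1.
    exact: (derivableM dM (derivableV D0 dD)).
  apply: near_eq_derivable dg2.
  apply: filterS (near_in_itvoo ht0) => s hs.
  have ents : forall w, 0 < upd x v s w.
    by apply: upd_pos => //; move: hs; rewrite in_itv /= => /andP[].
  have Deq : \prod_(k < m) pnorm (p k) (upd x v s) k = D s.
    apply: eq_bigr => k _; rewrite pnormE /bsum /B.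
    have -> : \sum_(j < d k) `|upd x v s (ventry j)| `^ p k =
              \sum_(j < d k) upd x v s (ventry j) `^ p k.
      by apply: eq_bigr => j _; rewrite ger0_norm // ltW.
    by [].
  have Mge : 0 <= mform f (upd x v s) := mform_ge0 f0 (fun w => ltW (ents w)).
  rewrite /Qfun Deq (ger0_norm Mge).
  reflexivity.
- by rewrite in_itv /= oppr_lt0 xv.
move=> t ht.
have u0 : upd x v 0 = x.
  by apply/funext => w; rewrite /upd; case: eqP => // ->; rewrite addr0.
rewrite u0; apply: xmax; apply: (pos_adm ax); apply: upd_pos => //.
by move: ht; rewrite in_itv /= => /andP[].
Qed.

End I.
Unset Implicit Arguments.
Theorem theorem5 (R : realType) (m : nat) (d : 'I_m -> nat)
  (p : 'I_m -> R) (f : tidx d -> R) :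
  (1 < m)%N ->
  (forall k, (0 < d k)%N) ->
  (forall k, 1 < p k) ->
  (forall j, 0 <= f j) ->
  weakly_irreducible f ->
  (exists i : 'I_m, forall k : 'I_m, k != i ->
      (m - 1)%N%:R * conjexp (p i) <= p k) ->
  exists x : tvtx d -> R,
    [/\ forall v, 0 < x v,
        singular_vector p f x &
        forall y : tvtx d -> R, admissible y -> Qfun p f y <= Qfun p f x].
Proof.
move=> m1 dpos p1 f0 wi [i hi].
have p0 : forall k, 0 < p k by move=> k; apply: lt_trans (p1 k).
have sumlt := sum_inv_lt1 m1 p1 hi.
have [J0 fJ] := exists_pos_entry m1 dpos wi.
have [x [xge0 xN xmax lam0]] := max_props p0 f0 fJ.
have xpos : forall v, 0 < x v := pos_max p0 f0 wi sumlt xge0 xN xmax lam0.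
have QxE : Qfun p f x = mform f x by rewrite Qfun_N // ger0_norm // ltW.
have ax := N_adm p0 xN.
exists x; split.
- exact: xpos.
- split; first exact: ax.
    by rewrite gt_eqF.
  apply: (sing_deriv p0 f0 ax xpos) => y ay; rewrite QxE; exact: xmax.
- by move=> y ay; rewrite QxE; apply: xmax.
Qed.
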